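(* Let $G$ be a graph that does not contain $K_{2,3}$ as a minor. Then $G$ contains $K^4$ as a minor if and only if $G$ contains $K^4$ as a subgraph.
   Context: Graphs are simple. *)

(* Defs.v *)
From mathcomp Require Import all_boot.
Set Implicit Arguments. Unset Strict Implicit. Unset Printing Implicit Defensive.

Definition simple_graph (T : finType) (e : rel T) : Prop :=
  symmetric e /\ irreflexive e.

Definition connected_in (T : finType) (e : rel T) (B : {set T}) : Prop :=
  forall x y, x \in B -> y \in B ->
    connect [rel u v | [&& e u v, u \in B & v \in B]] x y.

Definition minor_of (H : finType) (f : rel H) (T : finType) (e : rel T) : Prop :=
  exists B : H -> {set T},
    [/\ forall h, B h != set0,
        forall h, connected_in e (B h),
        forall h1 h2, h1 != h2 -> [disjoint B h1 & B h2]
      & forall h1 h2, f h1 h2 -> exists x y, [/\ x \in B h1, y \in B h2 & e x y]].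

Definition subgraph_of (H : finType) (f : rel H) (T : finType) (e : rel T) : Prop :=
  exists phi : H -> T, injective phi /\ forall h1 h2, f h1 h2 -> e (phi h1) (phi h2).

Definition K4_rel : rel 'I_4 := fun i j => i != j.

Definition K23_rel : rel ('I_2 + 'I_3)%type := fun u v =>
  match u, v with
  | inl _, inr _ => true
  | inr _, inl _ => true
  | _, _ => false
  end.

(* Main.v *)
Require Import Defs.
From mathcomp Require Import all_boot.
From mathcomp Require Import zify.
Set Implicit Arguments. Unset Strict Implicit. Unset Printing Implicit Defensive.

Definition rin (T : finType) (e : rel T) (B : {set T}) :=
  [rel u v | [&& e u v, u \in B & v \in B]].

Lemma cross (T : finType) (r : rel T) (Q : {set T}) x y :
  connect r x y -> x \in Q -> y \notin Q ->
  exists u v, [/\ u \in Q, v \notin Q & r u v].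
Proof.
move/connectP=> [p pth ->{y}]; elim: p x pth => [|z p IH] x /= pth xQ.
  by rewrite xQ.
case/andP: pth => rxz pth; case zQ: (z \in Q).
  exact: IH.
by move=> _; exists x, z; rewrite zQ.
Qed.

Lemma set1_ne0 (T : finType) (x : T) : [set x] != set0.
Proof. by apply/set0Pn; exists x; rewrite set11. Qed.

Lemma conn1 (T : finType) (e : rel T) (x : T) : connected_in e [set x].
Proof. by move=> u v /set1P -> /set1P ->; exact: connect0. Qed.

Definition sees (T : finType) (e : rel T) (S U : {set T}) :=
  [exists x in S, [exists y in U, e x y]].

Lemma seesP (T : finType) (e : rel T) (S U : {set T}) :
  reflect (exists x y, [/\ x \in S, y \in U & e x y]) (sees e S U).
Proof.
apply: (iffP existsP) => [[x /andP[xS /existsP[y /andP[yU exy]]]]|[x [y [xS yU exy]]]].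
  by exists x, y.
by exists x; rewrite xS; apply/existsP; exists y; rewrite yU.
Qed.

Lemma sees_sym (T : finType) (e : rel T) (S U : {set T}) :
  symmetric e -> sees e S U -> sees e U S.
Proof.
move=> es /seesP[x [y [xS yU exy]]]; apply/seesP; exists y, x.
by rewrite es.
Qed.

Definition K4model (T : finType) (e : rel T) (B : 'I_4 -> {set T}) :=
  [/\ forall h, B h != set0,
      forall h, connected_in e (B h),
      forall h1 h2, h1 != h2 -> [disjoint B h1 & B h2]
    & forall h1 h2, K4_rel h1 h2 -> exists x y, [/\ x \in B h1, y \in B h2 & e x y]].

Lemma replace_model (T : finType) (e : rel T) B a (S : {set T}) :
  symmetric e -> K4model e B -> S \subset B a -> S != set0 -> connected_in e S ->
  (forall h, h != a -> sees e S (B h)) ->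
  K4model e (fun h => if h == a then S else B h).
Proof.
move=> es [ne cn dj ed] sub Sn Sc see; split.
- by move=> h /=; case: ifP.
- by move=> h /=; case: ifP.
- move=> h1 h2 n12 /=.
  case: (eqVneq h1 a) => [eh1|h1a]; case: (eqVneq h2 a) => [eh2|h2a].
  + by rewrite eh1 eh2 eqxx in n12.
  + by apply: disjointWl sub _; apply: dj; rewrite -eh1.
  + by rewrite disjoint_sym; apply: disjointWl sub _; apply: dj; rewrite -eh2 eq_sym.
  + by apply: dj.
- move=> h1 h2 n12 /=; rewrite /K4_rel in n12.
  case: (eqVneq h1 a) => [eh1|h1a]; case: (eqVneq h2 a) => [eh2|h2a].
  + by rewrite eh1 eh2 eqxx in n12.
  + by apply/seesP; apply: see.
  + have /seesP[x [y [xS yU exy]]] := see h1 h1a.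
    by exists y, x; rewrite es.
  + by apply: ed.
Qed.

Lemma sum_lt (T : finType) (B : 'I_4 -> {set T}) a (S : {set T}) :
  #|S| < #|B a| ->
  \sum_h #|(if h == a then S else B h)| < \sum_h #|B h|.
Proof.
move=> lt; rewrite (bigD1 a) //= [X in _ < X](bigD1 a) //= eqxx.
rewrite (eq_bigr (fun h => #|B h|)); last by move=> h /negbTE ->.
by rewrite ltn_add2r.
Qed.

Lemma K23_build (T : finType) (e : rel T) (I : finType) (C : I -> {set T})
  (p1 p2 q1 q2 q3 : I) :
  symmetric e ->
  (forall i, C i != set0) -> (forall i, connected_in e (C i)) ->
  (forall i j, i != j -> [disjoint C i & C j]) ->
  uniq [:: p1; p2; q1; q2; q3] ->
  (forall p, p \in [:: p1; p2] -> forall q, q \in [:: q1; q2; q3] -> sees e (C p) (C q)) ->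
  minor_of K23_rel e.
Proof.
move=> es ne cn dj un see.
pose s := [:: p1; p2; q1; q2; q3].
pose code (u : 'I_2 + 'I_3) := match u with inl i => val i | inr j => 2 + val j end.
have code_lt u : code u < size s by case: u => [[i hi]|[j hj]] /=; lia.
have code_inj : injective code.
  case=> [[i hi]|[j hj]] [[i' hi']|[j' hj']] //= E.
  - by congr inl; apply: val_inj.
  - by move: hi; rewrite E.
  - by move: hi'; rewrite -E.
  - by congr inr; apply: val_inj; move: E => /= /eqP; rewrite eqn_add2l => /eqP.
pose g u := nth p1 s (code u).
exists (fun u => C (g u)); split => //.
- move=> u v uv; apply: dj; apply: contra uv.
  by rewrite /g nth_uniq // => /eqP /code_inj ->.
- have H i j : sees e (C (g (inl i))) (C (g (inr j))).
    apply: see.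
      by case: i => [[|[|//]] ?]; rewrite /g /= !inE eqxx ?orbT.
    by case: j => [[|[|[|//]]] ?]; rewrite /g /= !inE eqxx ?orbT.
  case=> [i|j] [i'|j'] //= _.
  + by apply/seesP; apply: H.
  + by apply/seesP; apply: sees_sym => //; apply: H.
Qed.

Lemma conn_sub (T : finType) (e : rel T) (S S' : {set T}) x y :
  S \subset S' -> connect (rin e S) x y -> connect (rin e S') x y.
Proof.
move=> sub; apply: connect_sub => u v /= /and3P[euv uS vS].
by apply: connect1; rewrite /= euv (subsetP sub _ uS) (subsetP sub _ vS).
Qed.

Lemma connU1 (T : finType) (e : rel T) (Q : {set T}) u w :
  symmetric e -> connected_in e Q -> u \in Q -> e u w -> connected_in e (w |: Q).
Proof.
move=> es cQ uQ euw.
have sub : Q \subset w |: Q by apply: subsetUr.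
have cQ' x y : x \in Q -> y \in Q -> connect (rin e (w |: Q)) x y.
  by move=> xQ yQ; apply: conn_sub sub _; apply: cQ.
have uw : rin e (w |: Q) u w by rewrite /= euw setU11 (subsetP sub _ uQ).
have wu : rin e (w |: Q) w u by rewrite /= es euw setU11 (subsetP sub _ uQ).
move=> x y; change (x \in w |: Q -> y \in w |: Q -> connect (rin e (w |: Q)) x y).
rewrite !in_setU1 => /predU1P[->|xQ] /predU1P[->|yQ].
- exact: connect0.
- apply: (@connect_trans _ (rin e (w |: Q)) u); first exact: connect1.
  exact: cQ'.
- apply: (@connect_trans _ (rin e (w |: Q)) u); last exact: connect1.
  exact: cQ'.
- exact: cQ'.
Qed.

Definition conb (T : finType) (e : rel T) (S : {set T}) :=
  [forall x in S, forall y in S, connect (rin e S) x y].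

Lemma conbP (T : finType) (e : rel T) (S : {set T}) :
  reflect (connected_in e S) (conb e S).
Proof.
apply: (iffP forallP) => H.
  move=> x y xS yS; move: (H x); rewrite xS /= => /forallP/(_ y).
  by rewrite yS.
move=> x; apply/implyP=> xS; apply/forallP=> y; apply/implyP=> yS; exact: H.
Qed.

Lemma third (a h1 h2 : 'I_4) : exists h3, [&& h3 != a, h3 != h1 & h3 != h2].
Proof.
have : 0 < #|[predC [:: a; h1; h2]]|.
  have := cardC (mem [:: a; h1; h2]); rewrite card_ord.
  have := card_size [:: a; h1; h2] => /= le3 E.
  rewrite -(ltn_add2l #|[:: a; h1; h2]|) addn0; rewrite E.
  by apply: leq_ltn_trans le3 _.
case/card_gt0P => h3; rewrite !inE !negb_or => /and3P[? ? ?].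
by exists h3; apply/and3P.
Qed.

Lemma all_small (T : finType) (e : rel T) (B : 'I_4 -> {set T}) :
  K4model e B -> (forall h, #|B h| <= 1) -> subgraph_of K4_rel e.
Proof.
move=> [ne cn dj ed] small.
have ex h : exists x, B h == [set x].
  have /cards1P[x ->] : #|B h| == 1 by rewrite eqn_leq small card_gt0 ne.
  by exists x.
pose phi h := xchoose (ex h).
have Bphi h : B h = [set phi h] by apply/eqP; exact: (xchooseP (ex h)).
exists phi; split.
  move=> h1 h2 E; apply/eqP; apply: contraT => n12.
  have := dj _ _ n12; rewrite !Bphi disjoints1 E.
  by rewrite set11.
move=> h1 h2 /ed[x [y [xB yB exy]]].
by move: xB yB; rewrite !Bphi => /set1P <- /set1P <-.
Qed.

Lemma main (T : finType) (e : rel T) : symmetric e -> forall n (B : 'I_4 -> {set T}),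
  K4model e B -> \sum_h #|B h| < n -> subgraph_of K4_rel e \/ minor_of K23_rel e.
Proof.
move=> es; elim=> [//|n IH] B mB; rewrite ltnS => szB.
case: (boolP [forall h, #|B h| <= 1]) => [/forallP small|].
  by left; apply: all_small mB small.
rewrite negb_forall => /existsP[a]; rewrite -ltnNge => big.
have [ne cn dj ed] := mB.
have [x0 x0B] := set0Pn _ (ne a).
pose P := [pred S : {set T} | [&& S \proper B a, S != set0 & conb e S]].
have P0 : P [set x0].
  rewrite inE /= properEcard sub1set x0B cards1 big set1_ne0 /=.
  by apply/conbP; apply: conn1.
case: (arg_maxnP (fun S : {set T} => #|S|) P0) => Q /and3P[QB Qn /conbP Qc] Qmax.
have [x xQ] := set0Pn _ Qn.
have [QsubB [y yB yQ]] := properP QB.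
have [u [w [uQ wQ /and3P[euw uB wB]]]] := cross (cn a x y (subsetP QsubB _ xQ) yB) xQ yQ.
have QwB : w |: Q = B a.
  apply/eqP; apply: contraT => neq.
  have PQ' : P (w |: Q).
    rewrite inE /= properEneq neq /= subUset sub1set wB QsubB.
    apply/and3P; split => //; first by apply/set0Pn; exists w; rewrite setU11.
    by apply/conbP; apply: connU1 euw.
  by have := Qmax _ PQ'; rewrite cardsU1 wQ /= add1n ltnn.
have Bsplit z : z \in B a -> z = w \/ z \in Q.
  by rewrite -QwB in_setU1 => /predU1P.
case: (boolP [forall h, (h != a) ==> sees e Q (B h)]) => [/forallP sQ|].
  apply: (IH (fun h => if h == a then Q else B h)).
    apply: replace_model => // h ha; exact: (implyP (sQ h) ha).
  apply: leq_trans _ szB; rewrite /=; exact: sum_lt (proper_card QB).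
rewrite negb_forall => /existsP[h1]; rewrite negb_imply => /andP[h1a nsQ1].
case: (boolP [forall h, (h != a) ==> sees e [set w] (B h)]) => [/forallP sW|].
  apply: (IH (fun h => if h == a then [set w] else B h)).
    apply: replace_model => //; first by rewrite sub1set.
      exact: set1_ne0.
      exact: conn1.
    move=> h ha; exact: (implyP (sW h) ha).
  apply: leq_trans _ szB; rewrite /=; apply: sum_lt; by rewrite cards1.
rewrite negb_forall => /existsP[h2]; rewrite negb_imply => /andP[h2a nsW2].
have split_see h : h != a -> sees e [set w] (B h) \/ sees e Q (B h).
  move=> ha; have ah : K4_rel a h by rewrite /K4_rel eq_sym.
  have [z [t [zB tB ezt]]] := ed a h ah.
  case: (Bsplit z zB) => [ez|zQ].
    by left; apply/seesP; exists z, t; rewrite ez set11 -ez.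
  by right; apply/seesP; exists z, t.
have sW1 : sees e [set w] (B h1) by case: (split_see h1 h1a) => // sQ1; by rewrite sQ1 in nsQ1.
have sQ2 : sees e Q (B h2) by case: (split_see h2 h2a) => // sW2; by rewrite sW2 in nsW2.
have h12 : h1 != h2 by apply: contraNneq nsW2 => <-.
have [h3 /and3P[h3a h31 h32]] := third a h1 h2.
pose C (o : option 'I_4) := match o with Some h => if h == a then Q else B h | None => [set w] end.
have Cne i : C i != set0 by case: i => [h|] /=; [case: ifP | exact: set1_ne0].
have Ccn i : connected_in e (C i) by case: i => [h|] /=; [case: ifP | exact: conn1].
have Cdj i j : i != j -> [disjoint C i & C j].
  have dQ h : h != a -> [disjoint Q & B h].
    by move=> ha; apply: disjointWl QsubB _; apply: dj; rewrite eq_sym.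
  have dW h : h != a -> [disjoint [set w] & B h].
    move=> ha; have ah : a != h by rewrite eq_sym.
    by rewrite disjoints1 (disjointFr (dj a h ah) wB).
  case: i => [i|]; case: j => [j|] //= nij.
  - case: ifP => [/eqP ia|/negbT ia]; case: ifP => [/eqP ja|/negbT ja].
    + by move: nij; rewrite ia ja eqxx.
    + by apply: dQ.
    + by rewrite disjoint_sym; apply: dQ.
    + by apply: dj; apply: contraNneq nij => ->.
  - case: ifP => [_|/negbT ia].
    + by rewrite disjoint_sym disjoints1.
    + by rewrite disjoint_sym; apply: dW.
  - case: ifP => [_|/negbT ja].
    + by rewrite disjoints1.
    + exact: dW.
have eB i j : i != j -> sees e (B i) (B j).
  by move=> ij; apply/seesP; apply: ed.
have sQW : sees e Q [set w] by apply/seesP; exists u, w; rewrite set11.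
have Ca : C (Some a) = Q by rewrite /= eqxx.
have Ch h : h != a -> C (Some h) = B h by move=> ha; rewrite /= (negbTE ha).
have h21 : h2 != h1 by rewrite eq_sym.
have h13 : h1 != h3 by rewrite eq_sym.
have h23 : h2 != h3 by rewrite eq_sym.
have ah1 : a != h1 by rewrite eq_sym.
have ah2 : a != h2 by rewrite eq_sym.
have ah3 : a != h3 by rewrite eq_sym.
have NEQ := (negbTE h12, negbTE h21, negbTE h13, negbTE h31, negbTE h23, negbTE h32,
  negbTE h1a, negbTE ah1, negbTE h2a, negbTE ah2, negbTE h3a, negbTE ah3).
right.
case: (split_see h3 h3a) => [sW3|sQ3].
- apply: (K23_build (C := C) (p1 := None) (p2 := Some h2) (q1 := Some h1) (q2 := Some h3) (q3 := Some a)) => //.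
    by rewrite /= !inE !(inj_eq (@Some_inj _)) ?NEQ.
  move=> p; rewrite !inE => /orP[] /eqP-> q; rewrite !inE => /or3P[] /eqP->;
    rewrite ?Ca ?Ch //.
  + exact: sees_sym.
  + by apply: eB; rewrite eq_sym.
  + by apply: eB; rewrite eq_sym.
  + exact: sees_sym.
- apply: (K23_build (C := C) (p1 := Some h1) (p2 := Some a) (q1 := Some h2) (q2 := Some h3) (q3 := None)) => //.
    by rewrite /= !inE !(inj_eq (@Some_inj _)) ?NEQ.
  move=> p; rewrite !inE => /orP[] /eqP-> q; rewrite !inE => /or3P[] /eqP->;
    rewrite ?Ca ?Ch //.
  + by apply: eB.
  + by apply: eB; rewrite eq_sym.
  + exact: sees_sym.
Qed.

Theorem lemma4p1 (T : finType) (e : rel T) :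
  simple_graph e ->
  ~ minor_of K23_rel e ->
  (minor_of K4_rel e <-> subgraph_of K4_rel e).
Proof.
move=> [es ei] noK23; split.
  move=> [B mB].
  have [//|//] := main es (n := (\sum_h #|B h|).+1) mB (ltnSn _).
move=> [phi [inj ed]].
exists (fun h => [set phi h]); split.
- by move=> h; apply: set1_ne0.
- by move=> h; apply: conn1.
- move=> h1 h2 n12; rewrite disjoints1 in_set1.
  by apply: contra n12 => /eqP /inj ->.
- by move=> h1 h2 /ed E; exists (phi h1), (phi h2); rewrite !set11.
Qed.
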